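(* Let $F:\mathcal{H}\to\mathbb{R}$ be differentiable with $L$-Lipschitz gradient, $\arg\min F\ne\emptyset$, satisfying (PL) with $\mu>0$, and let $x(\cdot)$ be the solution of the heavy ball system with damping $\alpha>0$ and initial point $x_0$. Let $a,\delta\ge0$, $R:=\alpha-a+\delta$, and assume $R>0$, $aR\le2\mu$ and $L-\alpha\delta+\frac\delta2R\le0$. Then for all $t>0$, $$F(x(t))-F_*\le C(t)e^{-mt},\qquad m=\min\{a,R\},$$ where $C(t)=(F(x_0)-F_* )\big(1+\frac{a}{|a-R|}\big)$ if $a\ne R$, and $C(t)=(F(x_0)-F_* )(1+at)$ if $a=R$.
   Context: (PL) with constant $\mu>0$: $F(x)-F_*\le \frac{1}{2\mu}\|\nabla F(x)\|^2$ for all $x$, where $F_*=\min F$. Heavy ball system: $\ddot x(t)+\alpha\dot x(t)+\nabla F(x(t))=0$, $x(0)=x_0$, $\dot x(0)=0$ (unique $C^2$ global solution). *)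

(* Defs.v *)
From mathcomp Require Import all_boot all_order all_algebra.
From mathcomp Require Import all_classical all_reals all_analysis.
Set Implicit Arguments. Unset Strict Implicit. Unset Printing Implicit Defensive.
Import Order.TTheory GRing.Theory Num.Theory.
Import numFieldNormedType.Exports.
Local Open Scope ring_scope.

(* [inner] is a real inner product on the normed space H inducing its norm:
   symmetric, linear in the first argument (hence bilinear), and
   <x,x> = |x|^2.  Together with completeness of H this makes H a real
   Hilbert space. *)
Definition is_inner_product (R : realType) (H : normedModType R)
  (inner : H -> H -> R) : Prop :=
  [/\ (forall x y, inner x y = inner y x),
      (forall a x y z, inner (a *: x + y) z = a * inner x z + inner y z)
    & (forall x, inner x x = `|x| ^+ 2)].

Definition Cconst (R : realType) (F0mFs a Rr t : R) : R :=
  if a != Rr then F0mFs * (1 + a / `|a - Rr|)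
  else F0mFs * (1 + a * t).

(* Main.v *)
Require Import Defs.
From mathcomp Require Import all_boot all_order all_algebra.
From mathcomp Require Import all_classical all_reals all_analysis.
From mathcomp Require Import ring lra.
Import Order.TTheory GRing.Theory Num.Theory.
Import numFieldNormedType.Exports.
Local Open Scope classical_set_scope.
Local Open Scope ring_scope.
Lemma dq (R : realType) (V : normedModType R) (f : R -> V) t :
  derivable f t 1 ->
  h^-1 *: (f (h + t) - f t) @[h --> 0^'+] --> derive1 f t.
Proof.
move=> df.
have e : (fun h : R => h^-1 *: (f (h + t) - f t)) =
  (fun h => h^-1 *: ((f \o shift t) (h *: 1) - f t)).
  by apply/funext => h /=; rewrite [h *: 1]mulr1.
rewrite e derive1E /derive; apply: cvg_dnbhs_at_right; exact: df.
Qed.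

Arguments dq {R V f t}.

Lemma shift_cvg (R : realType) (V : normedModType R) (f : R -> V) t :
  {for t, continuous f} -> f (h + t) @[h --> 0^'+] --> f t.
Proof.
move=> cf; apply: cvg_at_right_filter.
apply: (@cvg_comp _ _ _ (fun h => h + t) f _ (nbhs t)) => //.
suff : h + t @[h --> (0:R)] --> 0 + t by rewrite add0r.
apply: cvgD; [exact: cvg_id | exact: cvg_cst].
Qed.

Arguments shift_cvg {R V f t}.

Lemma dq_exp (R : realType) (c t : R) :
  h^-1 * (expR (c * (h + t)) - expR (c * t)) @[h --> 0^'+] --> c * expR (c * t).
Proof.
have d1 : derivable (fun s : R => c * s) t 1.
  by apply: derivableM; [exact: derivable_cst | exact: derivable_id].
have d2 : derivable expR (c * t) 1 by exact: derivable_expR.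
have d3 : derivable (expR \o (fun s => c * s)) t 1.
  by apply/derivable1_diffP; apply: differentiable_comp; apply/derivable1_diffP.
have := dq d3; rewrite (derive1_comp d1 d2).
rewrite !derive1E.
have -> : 'D_1 expR (c * t) = expR (c * t) by have [] := is_derive_expR (c * t).
have -> : 'D_1 ( *%R c) t = c.
  by have := deriveMl c (@derivable_id _ _ t 1); rewrite derive_id mulr1.
by rewrite mulrC.
Qed.
Arguments dq_exp {R} c t.

Lemma dini (R : realType) (phi : R -> R) :
  continuous phi ->
  (forall t, 0 <= t -> exists U : R -> R, exists l : R, [/\ l <= 0,
     U h @[h --> 0^'+] --> l &
     forall h, 0 < h -> phi (h + t) - phi t <= h * U h]) ->
  forall t, 0 <= t -> phi t <= phi 0.
Proof.
move=> cphi dphi t1 t10.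
rewrite leNgt; apply/negP => ht1.
have t1p : 0 < t1.
  rewrite lt_neqAle t10 andbT; apply/negP => /eqP e; by rewrite -e ltxx in ht1.
set eps := (phi t1 - phi 0) / (2 * t1).
have epsp : 0 < eps by rewrite divr_gt0 ?subr_gt0 ?mulr_gt0.
pose psi s := phi s - phi 0 - eps * s.
have psit1 : 0 < psi t1.
  have -> : psi t1 = (phi t1 - phi 0) / 2.
    rewrite /psi /eps; field; rewrite gt_eqF //.
  by rewrite divr_gt0 ?subr_gt0.
have cpsi : continuous psi.
  move=> s; apply: cvgB; first apply: cvgB.
  - exact: cphi.
  - exact: cvg_cst.
  apply: cvgM; [exact: cvg_cst | exact: cvg_id].
pose S := [set s | 0 <= s <= t1 /\ psi s <= 0].
have S0 : S 0 by rewrite /S /psi /= lexx t10 mulr0 !subrr lexx.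
have hS : has_sup S.
  split; first by exists 0.
  by exists t1 => s [/andP[_ ?] _].
set s0 := sup S.
have s0ge : 0 <= s0 by apply: sup_upper_bound.
have s0le : s0 <= t1 by apply: ge_sup; [exists 0 | move=> s [/andP[_ ?] _]].
have ps0 : psi s0 <= 0.
  rewrite leNgt; apply/negP => hp.
  have H : \forall s \near s0, 0 < psi s.
    exact: (@cvgr_gt _ _ _ _ psi (psi s0) (cpsi s0) 0 hp).
  case/nbhs_ballP: H => e ep hb.
  have [s Ss hs] := sup_adherent ep hS.
  have : psi s > 0.
    apply: hb; rewrite /ball /= ger0_norm ?subr_ge0; last by apply: sup_upper_bound.
    by rewrite ltrBlDr -ltrBlDl.
  by move=> Hgt; case: Ss => _ Hle; have := lt_le_trans Hgt Hle; rewrite ltxx.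
have s0lt : s0 < t1.
  rewrite lt_neqAle s0le andbT; apply/negP => /eqP e.
  by move: ps0; rewrite e leNgt psit1.
have [U [l [l0 cU hU]]] := dphi s0 s0ge.
have ep2 : l < eps / 2 by apply: le_lt_trans l0 _; rewrite divr_gt0.
have nr : \forall h \near 0^'+, U h < eps / 2.
    exact: (@cvgr_lt _ _ _ _ U l cU _ ep2).
have [h [[hp ht] hU2]] : exists h, (0 < h /\ h < t1 - s0) /\ U h < eps / 2.
  apply: (@filter_ex _ (0^'+)); near=> h; split; [split|].
  - by near: h; exact: nbhs_right_gt.
  - by near: h; apply: nbhs_right_lt; rewrite subr_gt0.
  - by near: h; exact: nr.
have Sh : S (h + s0).
  split.
    apply/andP; split; first by rewrite addr_ge0 // ltW.
    by rewrite -lerBrDr ltW.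
  have := hU h hp.
  rewrite /psi => H.
  have : h * U h <= h * (eps / 2) by rewrite ler_pM2l // ltW.
  have : h * (eps / 2) <= eps * h.
    by rewrite mulrC ler_pM2r // ler_pdivrMr // ler_peMr // ?ler1n // ltW.
  rewrite mulrDr; move: ps0; rewrite /psi; nra.
have := sup_upper_bound hS Sh; rewrite -/s0 -lerBrDr subrr leNgt hp //.
Unshelve. all: by end_near.
Qed.
Section IP.
Context (R : realType) (H : normedModType R) (inner : H -> H -> R).
Hypothesis ip : is_inner_product inner.

Lemma ipC x y : inner x y = inner y x.
Proof. by case: ip. Qed.
Lemma ipL a x y z : inner (a *: x + y) z = a * inner x z + inner y z.
Proof. by case: ip. Qed.
Lemma ipN x : inner x x = `|x| ^+ 2.
Proof. by case: ip. Qed.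
Lemma ip0l z : inner 0 z = 0.
Proof.
have := ipL 1 0 0 z; rewrite scale1r addr0 mul1r => e; lra.
Qed.
Lemma ipDl x y z : inner (x + y) z = inner x z + inner y z.
Proof. by rewrite -[x in LHS]scale1r ipL mul1r. Qed.
Lemma ipZl a x z : inner (a *: x) z = a * inner x z.
Proof. by rewrite -[_ *: _]addr0 ipL ip0l addr0. Qed.
Lemma ipNl x z : inner (- x) z = - inner x z.
Proof. by rewrite -scaleN1r ipZl mulN1r. Qed.
Lemma ipBl x y z : inner (x - y) z = inner x z - inner y z.
Proof. by rewrite ipDl ipNl. Qed.
Lemma ip0r z : inner z 0 = 0.
Proof. by rewrite ipC ip0l. Qed.
Lemma ipDr x y z : inner z (x + y) = inner z x + inner z y.
Proof. by rewrite ipC ipDl !(ipC z). Qed.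
Lemma ipZr a x z : inner z (a *: x) = a * inner z x.
Proof. by rewrite ipC ipZl ipC. Qed.
Lemma ipNr x z : inner z (- x) = - inner z x.
Proof. by rewrite ipC ipNl ipC. Qed.
Lemma ipBr x y z : inner z (x - y) = inner z x - inner z y.
Proof. by rewrite ipDr ipNr. Qed.

Lemma ip_polar x y : inner x y = (`|x + y| ^+ 2 - `|x - y| ^+ 2) / 4.
Proof.
rewrite -!ipN !ipDl !ipNl !ipDr !ipNr (ipC y x).
by field.
Qed.

Lemma ipCS x y : `|inner x y| <= `|x| * `|y|.
Proof.
have [->|x0] := eqVneq x 0.
  by rewrite ip0l !normr0 mul0r.
have Np : 0 < `|x| ^+ 2 by rewrite exprn_gt0 // normr_gt0.
set P := inner x y.
have key : P ^+ 2 <= `|x| ^+ 2 * `|y| ^+ 2.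
  set r := - P / `|x| ^+ 2.
  have h0 : 0 <= inner (r *: x + y) (r *: x + y) by rewrite ipN exprn_ge0.
  rewrite ipL !ipDr !ipZr ipN (ipN y) (ipC y x) -/P in h0.
  have e : r * (r * `|x| ^+ 2 + P) + (r * P + `|y| ^+ 2) =
     `|y| ^+ 2 - P ^+ 2 / `|x| ^+ 2.
    by rewrite /r; field; rewrite normr_eq0.
  rewrite e subr_ge0 ler_pdivrMr // in h0.
  by rewrite mulrC.
have hP : `|P| ^+ 2 = P ^+ 2 by rewrite real_normK // num_real.
have n1 := normr_ge0 P; have n2 := normr_ge0 x; have n3 := normr_ge0 y.
rewrite -hP -exprMn in key.
by move: key; rewrite ler_sqr ?nnegrE ?mulr_ge0.
Qed.

Lemma cvg_ip (T : Type) (F : set_system T) (FF : Filter F) (p q : T -> H) p0 q0 :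
  p s @[s --> F] --> p0 -> q s @[s --> F] --> q0 ->
  inner (p s) (q s) @[s --> F] --> inner p0 q0.
Proof.
move=> cp cq.
have -> : (fun s => inner (p s) (q s)) =
   (fun s => (`|p s + q s| * `|p s + q s| - `|p s - q s| * `|p s - q s|) / 4).
  by apply/funext => s; rewrite ip_polar !expr2.
rewrite ip_polar !expr2; apply: cvgM; last exact: cvg_cst.
apply: cvgB.
  by apply: cvgM; apply: cvg_norm; apply: cvgD.
by apply: cvgM; apply: cvg_norm; apply: cvgB.
Qed.

End IP.
Arguments cvg_ip {R H inner} ip {T F FF p q p0 q0}.
Arguments ipCS {R H inner} ip.
Arguments ipC {R H inner} ip.
Arguments ipL {R H inner} ip.
Arguments ipN {R H inner} ip.
Arguments ip0l {R H inner} ip.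
Arguments ipDl {R H inner} ip.
Arguments ipZl {R H inner} ip.
Arguments ipNl {R H inner} ip.
Arguments ipBl {R H inner} ip.
Arguments ip0r {R H inner} ip.
Arguments ipDr {R H inner} ip.
Arguments ipZr {R H inner} ip.
Arguments ipNr {R H inner} ip.
Arguments ipBr {R H inner} ip.
Arguments ip_polar {R H inner} ip.

Lemma lip_cont (R : realType) (H : normedModType R) (G : H -> H) (L : R) :
  (forall y z, `|G y - G z| <= L * `|y - z|) -> continuous G.
Proof.
move=> hL z; apply/cvgrPdist_le => e e0.
have k0 : 0 < `|L| + 1 by rewrite ltr_wpDl.
near=> y.
have hy : `|z - y| < e / (`|L| + 1).
  by near: y; exact: (@cvgr_dist_lt _ _ _ _ _ (fun y : H => y) z cvg_id (e / (`|L| + 1)) (divr_gt0 e0 k0)).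
have n0 := normr_ge0 (z - y); have hL1 := ler_norm L; have := hL z y.
have hy' : (`|L| + 1) * `|z - y| <= e by rewrite mulrC -ler_pdivlMr // ltW.
nra.
Unshelve. all: by end_near.
Qed.

Arguments lip_cont {R H G L}.



Lemma cont_exp (R : realType) (c : R) : continuous (fun s : R => expR (c * s)).
Proof.
move=> s; apply: differentiable_continuous.
have d1 : derivable (fun s : R => c * s) s 1.
  by apply: derivableM; [exact: derivable_cst | exact: derivable_id].
have d3 : derivable (expR \o (fun s => c * s)) s 1.
  by apply/derivable1_diffP; apply: differentiable_comp; apply/derivable1_diffP => //; exact: derivable_expR.
by apply/derivable1_diffP.
Qed.

Lemma exp_shift (R : realType) (c t : R) :
  expR (c * (h + t)) @[h --> 0^'+] --> expR (c * t).
Proof.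
apply: cvg_at_right_filter.
apply: (@cvg_comp _ _ _ (fun h => h + t) (fun s => expR (c * s)) _ (nbhs t)).
  suff : h + t @[h --> (0:R)] --> 0 + t by rewrite add0r.
  apply: cvgD; [exact: cvg_id | exact: cvg_cst].
exact: cont_exp.
Qed.

Theorem lemma6p3 (R : realType) (H : completeNormedModType R)
  (inner : H -> H -> R) (F : H -> R) (gradF : H -> H)
  (L mu alpha a delta Fs : R) (x0 : H) (x : R -> H) :
  is_inner_product inner ->
  (forall y, differentiable F y) ->
  (forall y h, 'd F y h = inner (gradF y) h) ->
  (forall y z, `|gradF y - gradF z| <= L * `|y - z|) ->
  (exists xs, F xs = Fs) -> (forall y, Fs <= F y) ->
  0 < mu ->
  (forall y, F y - Fs <= (2 * mu)^-1 * `|gradF y| ^+ 2) ->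
  0 < alpha ->
  (forall t, derivable x t 1) ->
  (forall t, derivable (derive1 x) t 1) ->
  (forall t, derive1 (derive1 x) t + alpha *: derive1 x t + gradF (x t) = 0) ->
  x 0 = x0 -> derive1 x 0 = 0 ->
  0 <= a -> 0 <= delta ->
  0 < alpha - a + delta ->
  a * (alpha - a + delta) <= 2 * mu ->
  L - alpha * delta + delta / 2 * (alpha - a + delta) <= 0 ->
  forall t, 0 < t ->
    F (x t) - Fs <=
      Cconst (F x0 - Fs) a (alpha - a + delta) t
      * expR (- (Num.min a (alpha - a + delta) * t)).
Proof.
move=> ip Fd dF Lip _ Fmin mu0 PL al0 dx dv ode x00 v00 a0 d0 R0 c1 c2 t tpos.
set Rr := alpha - a + delta in R0 c1 c2 *.
set v := derive1 x in dv ode v00.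
pose g s := gradF (x s).
pose u s := F (x s) - Fs.
pose N s := inner (v s) (v s).
pose P s := inner (g s) (v s).
pose E s := a * u s + delta / 2 * N s + P s.
have hvd s : derive1 v s = - (alpha *: v s) - g s.
  by move: (ode s); rewrite -addrA => /eqP; rewrite addr_eq0 => /eqP ->; rewrite opprD.
have cx s : {for s, continuous x} by apply: differentiable_continuous; apply/derivable1_diffP.
have cv s : {for s, continuous v} by apply: differentiable_continuous; apply/derivable1_diffP.
have cG := lip_cont Lip.
have cg s : {for s, continuous g} by apply: continuous_comp; [exact: cx | exact: cG].
have dFx s : differentiable (F \o x) s.
  by apply: differentiable_comp; [apply/derivable1_diffP | exact: Fd].
have du s : derivable (F \o x) s 1 by apply/derivable1_diffP.
have du' s : derive1 (F \o x) s = P s.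
  rewrite derive1E' // diff_comp //; last by apply/derivable1_diffP.
  by rewrite /= -derive1E' ?dF //; apply/derivable1_diffP.
have cu s : {for s, continuous u}.
  apply: cvgB; last exact: cvg_cst.
  exact: differentiable_continuous.
have u0 s : 0 <= u s by rewrite subr_ge0.
have N0 s : N s = `|v s| ^+ 2 by rewrite /N (ipN ip).
have cE s : {for s, continuous E}.
  apply: cvgD; first apply: cvgD.
  - by apply: cvgM; [exact: cvg_cst | exact: cu].
  - by apply: cvgM; [exact: cvg_cst | exact: (cvg_ip ip (cv s) (cv s))].
  - exact: (cvg_ip ip (cg s) (cv s)).
have E0 : E 0 = a * u 0 by rewrite /E /N /P v00 !(ip0r ip) mulr0 !addr0.
have st1 : forall s, 0 <= s -> expR (Rr * s) * E s <= a * u 0.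
  move=> s hs.
  have e00 : expR (Rr * 0) * E 0 = a * u 0 by rewrite mulr0 expR0 mul1r E0.
  rewrite -e00.
  apply: (@dini R (fun s => expR (Rr * s) * E s)) => //.
  - by move=> r; apply: cvgM; [exact: cont_exp | exact: cE].
  move=> {hs} s hs.
  pose e1 h := expR (Rr * (h + s)).
  pose qu h := h^-1 * (F (x (h + s)) - F (x s)).
  pose qx h := h^-1 *: (x (h + s) - x s).
  pose qv h := h^-1 *: (v (h + s) - v s).
  pose qn h := inner (qv h) (v (h + s)) + inner (v s) (qv h).
  pose qgv h := inner (g s) (qv h).
  pose qe h := h^-1 * (expR (Rr * (h + s)) - expR (Rr * s)).
  pose v' := derive1 v s.
  exists (fun h => e1 h * (a * qu h + delta / 2 * qn h + L * (`|qx h| * `|v (h + s)|) + qgv h) + qe h * E s).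
  exists (expR (Rr * s) * (a * P s + delta / 2 * (inner v' (v s) + inner (v s) v') + L * (`|v s| * `|v s|) + inner (g s) v') + Rr * expR (Rr * s) * E s).
  split.
  - have iv1 : inner v' (v s) = - (alpha * N s) - P s.
      by rewrite /v' hvd (ipBl ip) (ipNl ip) (ipZl ip).
    have iv2 : inner (v s) v' = - (alpha * N s) - P s by rewrite (ipC ip).
    have ig : inner (g s) v' = - (alpha * P s) - `|g s| ^+ 2.
      by rewrite /v' hvd (ipBr ip) (ipNr ip) (ipZr ip) (ipN ip).
    have vv : `|v s| * `|v s| = N s by rewrite N0 expr2.
    rewrite iv1 iv2 ig vv.
    have hPL : u s <= (2 * mu)^-1 * `|g s| ^+ 2 := PL (x s).
    have h2m : 0 < 2 * mu by rewrite mulr_gt0.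
    have hm : (2 * mu) * ((2 * mu)^-1 * `|g s| ^+ 2) = `|g s| ^+ 2.
      by rewrite mulrA mulfV ?gt_eqF // mul1r.
    have hG : 2 * mu * u s <= `|g s| ^+ 2 by rewrite -hm ler_pM2l.
    have Nge : 0 <= N s by rewrite N0 exprn_ge0.
    have ex := expR_gt0 (Rr * s).
    have us := u0 s.
    have key : a * P s + delta / 2 * (- (alpha * N s) - P s + (- (alpha * N s) - P s)) + L * N s +
      (- (alpha * P s) - `|g s| ^+ 2) + Rr * E s <= 0.
      rewrite /E /Rr; rewrite /Rr in c1 c2; nra.
    nra.
  - apply: cvgD; last by apply: cvgM; [exact: dq_exp | exact: cvg_cst].
    apply: cvgM; first exact: exp_shift.
    apply: cvgD; first apply: cvgD; first apply: cvgD.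
    + apply: cvgM; first exact: cvg_cst.
      by have := dq (du s); rewrite du'.
    + apply: cvgM; first exact: cvg_cst.
      apply: cvgD; first exact: (cvg_ip ip (dq (dv s)) (shift_cvg (cv s))).
      exact: (cvg_ip ip (cvg_cst _) (dq (dv s))).
    + apply: cvgM; first exact: cvg_cst.
      by apply: cvgM; apply: cvg_norm; [exact: (dq (dx s)) | exact: (shift_cvg (cv s))].
    + exact: (cvg_ip ip (cvg_cst _) (dq (dv s))).
  - move=> h hp.
    have h0 : h != 0 by rewrite gt_eqF.
    have hq1 : h * qu h = u (h + s) - u s by rewrite /qu /u; field.
    have hq2 : h * qn h = N (h + s) - N s.
      rewrite /qn /qv (ipZl ip) (ipZr ip) /N.
      have -> : inner (v (h + s)) (v (h + s)) - inner (v s) (v s) =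
          inner (v (h + s) - v s) (v (h + s)) + inner (v s) (v (h + s) - v s).
        by rewrite (ipBl ip) (ipBr ip) (ipC ip (v s) (v (h + s))); ring.
      by field.
    have hq3 : h * qgv h = inner (g s) (v (h + s) - v s).
      by rewrite /qgv /qv (ipZr ip); field.
    have hq4 : h * `|qx h| = `|x (h + s) - x s|.
      by rewrite /qx normrZ ger0_norm ?invr_ge0 ?ltW // mulrA mulfV // mul1r.
    have hq5 : h * qe h = e1 h - expR (Rr * s) by rewrite /qe /e1; field.
    have hP : P (h + s) - P s <= L * `|x (h + s) - x s| * `|v (h + s)| +
        inner (g s) (v (h + s) - v s).
      have -> : P (h + s) - P s = inner (g (h + s) - g s) (v (h + s)) +
          inner (g s) (v (h + s) - v s).
        by rewrite /P (ipBl ip) (ipBr ip); ring.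
      rewrite lerD2r; apply: le_trans (ler_norm _) _.
      apply: le_trans (ipCS ip _ _) _; apply: ler_wpM2r => //; exact: Lip.
    have he1 : 0 < e1 h := expR_gt0 _.
    have -> : h * (e1 h * (a * qu h + delta / 2 * qn h + L * (`|qx h| * `|v (h + s)|) + qgv h) + qe h * E s) =
      e1 h * (a * (h * qu h) + delta / 2 * (h * qn h) + L * ((h * `|qx h|) * `|v (h + s)|) + h * qgv h) + (h * qe h) * E s by ring.
    rewrite hq1 hq2 hq3 hq4 hq5.
    rewrite /e1 /E in he1 *.
    nra.
pose c := a - Rr.
pose S := if a == Rr then (fun s : R => s) else (fun s => (a - Rr)^-1 * (expR (c * s) - 1)).
have S0 : S 0 = 0.
  by rewrite /S; case: ifP => _ //; rewrite mulr0 expR0 subrr mulr0.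
have st2 : forall s, 0 <= s -> expR (a * s) * u s - a * u 0 * S s <= u 0.
  move=> s hs.
  have e00 : expR (a * 0) * u 0 - a * u 0 * S 0 = u 0.
    by rewrite S0 mulr0 mulr0 expR0 mul1r subr0.
  apply: (@le_trans _ _ (expR (a * 0) * u 0 - a * u 0 * S 0)); last by rewrite e00.
  apply: (@dini R (fun s => expR (a * s) * u s - a * u 0 * S s)) => //.
  - move=> r; apply: cvgB; first by apply: cvgM; [exact: cont_exp | exact: cu].
    apply: cvgM; first exact: cvg_cst.
    rewrite /S; case: ifP => _; first exact: cvg_id.
    apply: cvgM; first exact: cvg_cst.
    by apply: cvgB; [exact: cont_exp | exact: cvg_cst].
  move=> {hs} s hs.
  pose qS := if a == Rr then (fun h : R => 1) else
     (fun h => (a - Rr)^-1 * (h^-1 * (expR (c * (h + s)) - expR (c * s)))).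
  exists (fun h => expR (a * (h + s)) * (h^-1 * (F (x (h + s)) - F (x s))) +
     h^-1 * (expR (a * (h + s)) - expR (a * s)) * u s - a * u 0 * qS h).
  exists (expR (a * s) * P s + a * expR (a * s) * u s - a * u 0 * expR (c * s)).
  split.
  - have hE := st1 s hs.
    have hsplit : expR (a * s) = expR (c * s) * expR (Rr * s).
      by rewrite -expRD /c; congr expR; ring.
    have Nge : 0 <= N s by rewrite N0 exprn_ge0.
    have hPE : P s + a * u s <= E s by rewrite /E; nra.
    have ea := expR_gt0 (a * s); have ec := expR_gt0 (c * s).
    have k1 : expR (a * s) * (P s + a * u s) <= expR (a * s) * E s by rewrite ler_pM2l.
    have k2 : expR (c * s) * (expR (Rr * s) * E s) <= expR (c * s) * (a * u 0) by rewrite ler_pM2l.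
    rewrite hsplit in k1 *.
    nra.
  - apply: cvgB; first apply: cvgD.
    + apply: cvgM; first exact: exp_shift.
      by have := dq (du s); rewrite du'.
    + by apply: cvgM; [exact: dq_exp | exact: cvg_cst].
    + apply: cvgM; first exact: cvg_cst.
      rewrite /qS; case: ifP => /eqP e.
        have -> : c = 0 by rewrite /c e subrr.
        by rewrite mul0r expR0; exact: cvg_cst.
      have hk : (a - Rr)^-1 * (c * expR (c * s)) = expR (c * s).
        by rewrite /c mulrA mulVf ?mul1r // subr_eq0; apply/eqP.
      by have := cvgM (cvg_cst (a - Rr)^-1) (dq_exp c s); rewrite hk; apply.
  - move=> h hp.
    have h0 : h != 0 by rewrite gt_eqF.
    have eqle : forall y z : R, y = z -> y <= z by move=> y z ->.
    apply: eqle; rewrite /S /qS /u; case: ifP => /eqP e.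
      by field.
    by field; rewrite h0 subr_eq0 /=; apply/eqP.
have fin := st2 t (ltW tpos).
have u00 : u 0 = F x0 - Fs by rewrite /u x00.
have ut : u t = F (x t) - Fs by [].
rewrite -ut /Cconst -u00.
have U0 := u0 0; have Ut := u0 t.
have [e|ne] := eqVneq a Rr.
  rewrite /S e eqxx /= minxx in fin *.
  rewrite expRN ler_pdivlMr ?expR_gt0 //.
  by rewrite -e in fin *; nra.
rewrite /=.
have {}fin : expR (a * t) * u t - a * u 0 * ((a - Rr)^-1 * (expR (c * t) - 1)) <= u 0.
  by move: fin; rewrite /S (negbTE ne).
have hsplit : expR (a * t) = expR (c * t) * expR (Rr * t).
  by rewrite -expRD /c; congr expR; ring.
have ec := expR_gt0 (c * t); have er := expR_gt0 (Rr * t); have ea := expR_gt0 (a * t).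
have [alt|rlt] := ltP a Rr.
  rewrite expRN ler_pdivlMr //.
  have w0 : (a - Rr)^-1 < 0 by rewrite invr_lt0 subr_lt0.
  have nr : `|a - Rr| = - (a - Rr) by rewrite ltr0_norm // subr_lt0.
  rewrite nr invrN mulrN.
  have k : a * u 0 * (a - Rr)^-1 * expR (c * t) <= 0.
    apply: mulr_le0_ge0; last exact: ltW.
    by apply: mulr_ge0_le0; [exact: mulr_ge0 | exact: ltW].
  nra.
rewrite expRN ler_pdivlMr //.
have w0 : 0 < (a - Rr)^-1.
  by rewrite invr_gt0 subr_gt0 lt_neqAle rlt andbT eq_sym.
have nr : `|a - Rr| = a - Rr by rewrite ger0_norm // subr_ge0.
rewrite nr.
have ec1 : 1 <= expR (c * t).
  have c0 : 0 <= c by rewrite /c subr_ge0.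
  by rewrite -expR0 ler_expR mulr_ge0 // ltW.
have k : expR (c * t) * (u t * expR (Rr * t)) <= expR (c * t) * (u 0 * (1 + a * (a - Rr)^-1)).
  rewrite hsplit in fin.
  have k1 : 0 <= a * u 0 * (a - Rr)^-1 by rewrite mulr_ge0 // ?mulr_ge0 // ltW.
  nra.
by rewrite ler_pM2l in k.
Qed.
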